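(* Let $H=(Q,\pi,f_0,f_1)$ satisfy Assumptions A1 and A2 (see context). Then for each $\lambda\in(0,1)$, $$\mathrm{mTDR}_H(\varphi_{\lambda,H})=\sup\{\mathrm{mTDR}_H(\psi):\mathrm{mFDR}_H(\psi)\le\mathrm{mFDR}_H(\varphi_{\lambda,H})\},$$ the supremum being over all multiple testing procedures $\psi$ (measurable maps $X\mapsto\psi(X)\in\{0,1\}^N$).
   Context: Two-state HMM: $\mu$ Lebesgue on $\mathbb R$ or counting on $\mathbb Z$; under $\Pi_H$, $\theta=(\theta_n)_{n\le N}$ is a Markov chain on $\{0,1\}$ (initial law $\pi$, transition $Q$) and given $\theta$ the $X_n$ are independent with $\mu$-densities $f_{\theta_n}$; $E_H$ denotes expectation. Assumption A1: (i) some $\nu>0$ has $\max_jE_{X\sim f_j}|X|^\nu<\infty$; (ii) some $x^*\in\mathbb R\cup\{\pm\infty\}$ has $f_1/f_0\to\infty$ as $x\uparrow x^*$ or as $x\downarrow x^*$ (conventions $1/0=\infty,0/0=0$). Assumption A2: $Q$ has distinct rows, $\min_{ij}Q_{ij}>0$, $\pi$ invariant for $Q$. $\ell_i=\Pi_H(\theta_i=0\mid X)$, $\varphi_{\lambda,H}=(\mathbb 1\{\ell_i<\lambda\})_{i\le N}$. $\mathrm{mTDR}_H(\varphi)=\frac{E_H\#\{i:\theta_i=1,\varphi_i=1\}}{E_H\#\{i:\theta_i=1\}}$, $\mathrm{mFDR}_H(\varphi)=\frac{E_H\#\{i:\theta_i=0,\varphi_i=1\}}{E_H\#\{i:\varphi_i=1\}}$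 with the convention $0/0=0$. *)

(* Defs.v *)
From HB Require Import structures.
From mathcomp Require Import all_boot all_order all_algebra.
From mathcomp Require Import all_classical all_reals all_analysis.
Set Implicit Arguments. Unset Strict Implicit. Unset Printing Implicit Defensive.
Import Order.TTheory GRing.Theory Num.Theory.
Import numFieldNormedType.Exports.
Local Open Scope classical_set_scope.
Local Open Scope ring_scope.

(* States: false = 0 (null), true = 1 (non-null).
   Observations X = (X_0,...,X_{N-1}) are represented as x : nat -> R,
   only the coordinates i < N being relevant. *)

Section HMM.
Variable R : realType.
Local Notation RT := (measurableTypeR R).

(* enumeration nat -> Z (as reals): 0, -1, 1, -2, 2, ... (a bijection onto Z) *)
Definition zenum (n : nat) : R :=
  if odd n then - (n.+1./2)%:R else (n./2)%:R.

(* counting measure on Z, seen as a measure on R: A |-> #(A /\ Z) *)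
Definition countZ : {measure set RT -> \bar R} :=
  mseries (fun n => @dirac _ RT (zenum n) R) O.

Definition mu_of (disc : bool) : {measure set RT -> \bar R} :=
  if disc then countZ else lebesgue_measure.

Definition upd (x : nat -> R) (k : nat) (y : R) : nat -> R :=
  fun j => if j == k then y else x j.

(* iterated integral over the coordinates 0..n-1 (Tonelli: this is the integral
   w.r.t. the product measure mu^n for nonnegative measurable integrands) *)
Fixpoint iint_aux (mu : {measure set RT -> \bar R}) (n : nat)
    (g : (nat -> R) -> \bar R) (x : nat -> R) : \bar R :=
  match n with
  | 0 => g x
  | k.+1 => (\int[mu]_y iint_aux mu k g (upd x k y))%E
  end.

Definition iint mu n g := iint_aux mu n g (fun _ => 0).

Variables (N : nat) (pi : bool -> R) (Q : bool -> bool -> R) (f : bool -> R -> R).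

Definition prior (t : N.-tuple bool) : R :=
  if N is 0 then 1 else
  pi (nth false t 0) * \prod_(1 <= k < N) Q (nth false t k.-1) (nth false t k).

(* joint density of (theta, X) w.r.t. counting x mu^N *)
Definition jdens (t : N.-tuple bool) (x : nat -> R) : R :=
  prior t * \prod_(i < N) f (tnth t i) (x i).

Definition EH (mu : {measure set RT -> \bar R})
    (G : N.-tuple bool -> (nat -> R) -> \bar R) : \bar R :=
  (\sum_(t : N.-tuple bool) iint mu N (fun x => (jdens t x)%:E * G t x))%E.

Definition ell (i : 'I_N) (x : nat -> R) : R :=
  (\sum_(t : N.-tuple bool | ~~ tnth t i) jdens t x) /
  (\sum_(t : N.-tuple bool) jdens t x).

Definition phi_lam (lam : R) : (nat -> R) -> 'I_N -> bool :=
  fun x i => ell i x < lam.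

(* Borel sets of R^N (sigma-algebra generated by measurable boxes in the
   first N coordinates) *)
Definition boxes : set (set (nat -> R)) :=
  [set B | exists A : nat -> set RT, (forall i, measurable (A i)) /\
           B = [set x | forall i, (i < N)%N -> A i (x i)]].

Definition measurable_proc (psi : (nat -> R) -> 'I_N -> bool) : Prop :=
  forall i : 'I_N, <<s boxes >> [set x | psi x i].

Definition mTDR mu (psi : (nat -> R) -> 'I_N -> bool) : R :=
  fine (EH mu (fun t x => (#|[set i : 'I_N | tnth t i && psi x i]|%:R)%:E)) /
  fine (EH mu (fun t x => (#|[set i : 'I_N | tnth t i]|%:R)%:E)).

Definition mFDR mu (psi : (nat -> R) -> 'I_N -> bool) : R :=
  fine (EH mu (fun t x => (#|[set i : 'I_N | ~~ tnth t i && psi x i]|%:R)%:E)) /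
  fine (EH mu (fun t x => (#|[set i : 'I_N | psi x i]|%:R)%:E)).

End HMM.

(* ratio f1/f0 with conventions 1/0 = oo, 0/0 = 0 *)
Definition eratio (R : realType) (a b : R) : \bar R :=
  if b == 0 then (if a == 0 then 0%E else +oo%E) else (a / b)%:E.

Definition densities (R : realType) (disc : bool) (f : bool -> R -> R) : Prop :=
  forall j, (forall x, 0 <= f j x) /\ measurable_fun setT (f j : measurableTypeR R -> R) /\
            (\int[@mu_of R disc]_x (f j x)%:E = 1)%E.

Definition A1i (R : realType) (disc : bool) (f : bool -> R -> R) : Prop :=
  exists nu : R, 0 < nu /\
    forall j, (\int[@mu_of R disc]_x ((`|x| `^ nu) * f j x)%:E < +oo)%E.

(* For counting measure on Z, x ranges over Z, so
   the only accumulation points are x* = +oo (x increasing) and x* = -oo. *)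
Definition A1ii (R : realType) (disc : bool) (f : bool -> R -> R) : Prop :=
  let LR := fun x : R => eratio (f true x) (f false x) in
  if disc then
    (LR n%:R @[n --> \oo] --> +oo%E) \/ (LR (- n%:R) @[n --> \oo] --> +oo%E)
  else exists xs : \bar R,
    match xs with
    | EFin r => (LR x @[x --> r^'-] --> +oo%E) \/ (LR x @[x --> r^'+] --> +oo%E)
    | +oo%E => LR x @[x --> +oo] --> +oo%E
    | -oo%E => LR x @[x --> -oo] --> +oo%E
    end.

Definition hmm_params (R : realType) (pi : bool -> R) (Q : bool -> bool -> R) : Prop :=
  (forall j, 0 <= pi j) /\ pi false + pi true = 1 /\
  (forall i j, 0 <= Q i j) /\ (forall i, Q i false + Q i true = 1).

Definition A2 (R : realType) (pi : bool -> R) (Q : bool -> bool -> R) : Prop :=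
  Q false <> Q true /\ (forall i j, 0 < Q i j) /\
  (forall j, pi false * Q false j + pi true * Q true j = pi j).

(* Main.v *)
Require Import Defs.
From HB Require Import structures.
From mathcomp Require Import all_boot all_order all_algebra.
From mathcomp Require Import all_classical all_reals all_analysis.
From mathcomp Require Import measurable_realfun.
From mathcomp Require Import ring lra.
Import Order.TTheory GRing.Theory Num.Theory.
Local Open Scope classical_set_scope.
Local Open Scope ring_scope.
Set Implicit Arguments. Unset Strict Implicit. Unset Printing Implicit Defensive.

Lemma zenum_inj (R : realType) : injective (@zenum R).
Proof.
have half_odd n : odd n -> n.+1 = ((n.+1)./2).*2.
  by move=> on; have := odd_double_half n.+1; rewrite /= on /= add0n.
have half_even n : ~~ odd n -> n = (n./2).*2.
  by move=> en; have := odd_double_half n; rewrite (negbTE en) add0n.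
move=> n k; rewrite /zenum.
case: (boolP (odd n)) => on; case: (boolP (odd k)) => ok.
- move/eqP; rewrite eqr_opp eqr_nat => /eqP H.
  by apply/succn_inj; rewrite (half_odd n on) (half_odd k ok) H.
- move=> H; have : (0 : R) < (n.+1./2)%:R.
    by rewrite ltr0n; case: n on {H} => //.
  by rewrite -oppr_lt0 H ltNge ler0n.
- move=> H; have : (0 : R) < (k.+1./2)%:R.
    by rewrite ltr0n; case: k ok {H} => //.
  by rewrite -oppr_lt0 -H ltNge ler0n.
- move/eqP; rewrite eqr_nat => /eqP H.
  by rewrite (half_even n on) (half_even k ok) H.
Qed.

Lemma sigma_finite_countZ (R : realType) : sigma_finite setT (@countZ R).
Proof.
exists (fun n => if n is n'.+1 then [set @zenum R n'] else ~` range (@zenum R)).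
  apply/seteqP; split => // x _.
  case: (pselect (range (@zenum R) x)) => [[n _ <-]|nr].
    by exists n.+1.
  by exists 0%N.
case => [|n]; split.
- apply: measurableC.
  have -> : range (@zenum R) = \bigcup_n [set @zenum R n].
    by apply/seteqP; split => [x [n _ <-]|x [n _ ->]]; [exists n|exists n].
  by apply: bigcup_measurable => k _; exact: measurable_set1.
- rewrite /countZ /= /mseries eseries0 // => i _ _.
  apply: eq_trans; first exact: diracE. by case: (boolP (_ \in _)) => //; rewrite inE /=; case; exists i.
- exact: measurable_set1.
- rewrite /countZ /= /mseries (nneseries_split 0 n.+1); last by move=> k _.
  rewrite (@eseries0 _ _ (0 + n.+1)%N) ?adde0; last first.
    move=> i; rewrite add0n => ni _; apply: eq_trans; first exact: diracE.
    case: (boolP (_ \in _)) => //.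
    by rewrite inE /= => /zenum_inj ein; move: ni; rewrite ein ltnn.
  rewrite (eq_bigr (fun k => ((@zenum R k \in [set @zenum R n])%:R)%:E)); last by move=> k _; exact: diracE.
  by rewrite sumEFin ltry.
Qed.

Definition muf (R : realType) (disc : bool) : set (measurableTypeR R) -> \bar R := @mu_of R disc.
HB.instance Definition _ R disc := Measure.on (@muf R disc).
Lemma sf_muf R disc : sigma_finite setT (@muf R disc).
Proof.
case: disc; rewrite /muf /mu_of /=; first exact: sigma_finite_countZ.
exact: sigma_finiteT.
Qed.
HB.instance Definition _ R disc := @Measure_isSigmaFinite.Build _ _ _ (@muf R disc) (sf_muf R disc).

Lemma iint_ext (R : realType) (mu1 mu2 : {measure set (measurableTypeR R) -> \bar R}) n g x :
  (forall A, mu1 A = mu2 A) -> iint_aux mu1 n g x = iint_aux mu2 n g x.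
Proof.
move=> H; have E : (mu1 : set _ -> _) = mu2 by apply/funext.
elim: n x => [//|n IH] x /=.
under eq_integral do rewrite IH.
by rewrite /integral E.
Qed.

Lemma arith (R : realFieldType) (l a b A B W : R) : 0 < l -> l < 1 -> 0 <= a -> 0 <= b -> 0 <= A -> 0 <= B -> 0 <= W ->
 l*a + (1-l)*B <= l*A + (1-l)*b -> W + (1-l)*B = l*A -> (A + B != 0 -> W != 0) ->
 b/(a+b) <= B/(A+B) -> a <= A.
Proof.
move=> l0 l1 a0 b0 A0 B0 W0 h1 h2 h3 hb.
case: (eqVneq (A+B) 0) => [AB0|ABn].
  have AA : A = 0 by lra.
  have BB : B = 0 by lra.
  move: hb; rewrite AB0 invr0 mulr0 => hb.
  case: (eqVneq (a+b) 0) => [ab0|abn]; first lra.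
  have abp : 0 < a+b by rewrite lt_neqAle eq_sym abn /=; lra.
  move: hb; rewrite ler_pdivrMr // mul0r => hb.
  nra.
have Wp : 0 < W by rewrite lt_neqAle eq_sym (h3 ABn).
have ABp : 0 < A+B by rewrite lt_neqAle eq_sym ABn /=; lra.
case: (eqVneq (a+b) 0) => [ab0|abn]; first lra.
have abp : 0 < a+b by rewrite lt_neqAle eq_sym abn /=; lra.
move: hb; rewrite ler_pdivrMr // mulrAC ler_pdivlMr // => hb.
rewrite leNgt; apply/negP => aA.
have g1 : (1-l)*B < l*A by lra.
have g2 : b*A <= B*a by nra.
have g6 : 0 < (a-A)*(l*A - (1-l)*B) by apply: mulr_gt0; lra.
have g3 : (1-l)*(b-B)*A >= l*(a-A)*A.
  have : (1-l)*(b-B) >= l*(a-A) by lra.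
  move=> h; have := ler_wpM2r A0 h; lra.
have g5 : (1-l)*((b-B)*A) <= (1-l)*(B*(a-A)).
  by apply: ler_wpM2l; [lra|nra].
nra.
Qed.

Definition XT (R : realType) := nat -> R.
HB.instance Definition _ R := gen_eqMixin (XT R).
HB.instance Definition _ R := gen_choiceMixin (XT R).
HB.instance Definition _ R := isPointed.Build (XT R) (fun=> 0%R).
Section Sec.
Variables (R : realType) (N : nat).
Local Notation RT := (measurableTypeR R).
Local Notation X := (@g_sigma_algebraType (XT R) (@boxes R N)).
Lemma measX : (measurable : set (set X)) = <<s @boxes R N >>. Proof. by []. Qed.

Lemma box_meas (A : nat -> set RT) : (forall i, measurable (A i)) ->
  measurable ([set x | forall i, (i < N)%N -> A i (x i)] : set X).
Proof. move=> mA; apply: sub_gen_smallest; by exists A. Qed.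

Lemma upd_mf k : measurable_fun setT (fun p : X * RT => (upd p.1 k p.2 : X)).
Proof.
apply: (@measurability _ _ _ X setT _ (@boxes R N) erefl).
move=> _ [_ [A [mA ->]] <-].
rewrite setTI.
have -> : (fun p : X * RT => (upd p.1 k p.2 : X)) @^-1` [set x | forall i, (i < N)%N -> A i (x i)]
   = [set x : X | forall i, (i < N)%N -> (if i == k then setT else A i) (x i)] `*`
     (if (k < N)%N then A k else setT).
  apply/seteqP; split => [[x y]|[x y]] /=.
    move=> H; split.
      by move=> i iN; case: eqP => // ik; have := H i iN; rewrite /upd; case: eqP.
    by case: ifP => // kN; have := H k kN; rewrite /upd eqxx.
  move=> [H1 H2] i iN; rewrite /upd; case: eqP => [ik|ik].
    by subst i; move: H2; rewrite iN.
  by have := H1 i iN; case: eqP.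
apply: measurableX; first by apply: (box_meas (A := fun i => if i == k then setT else A i)) => i; case: eqP.
by case: ifP.
Qed.

Lemma updx_mf x k : measurable_fun setT (fun y : RT => (upd x k y : X)).
Proof.
exact: (measurableT_comp (upd_mf k) (pair1_measurable (x : X))).
Qed.

Variable m : {sigma_finite_measure set RT -> \bar R}.

Definition Pm (g : X -> \bar R) := measurable_fun (setT : set X) g /\ (forall x, (0 <= g x)%E).

Lemma iint_Pm n g : Pm g -> Pm (iint_aux m n g).
Proof.
move=> Pg; elim: n => [//|n [IHm IH0]] /=; split; last first.
  by move=> x; apply: integral_ge0 => y _; exact: IH0.
have := @measurable_fun_fubini_tonelli_F _ _ X RT R m
   (fun p : X * RT => iint_aux m n g (upd p.1 n p.2)).
apply.
  exact: (measurableT_comp IHm (upd_mf n)).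
by move=> p; exact: IH0.
Qed.

Lemma sect_mf n g x : Pm g -> measurable_fun setT (fun y : RT => iint_aux m n g (upd x n y)).
Proof. move=> /(iint_Pm n) [mg _]; exact: (measurableT_comp mg (updx_mf x n)). Qed.

Lemma Pm_add g1 g2 : Pm g1 -> Pm g2 -> Pm (fun x => g1 x + g2 x)%E.
Proof.
move=> [m1 p1] [m2 p2]; split; first exact: emeasurable_funD.
by move=> x; apply: adde_ge0.
Qed.

Lemma iintD n g1 g2 x : Pm g1 -> Pm g2 ->
  iint_aux m n (fun x => g1 x + g2 x)%E x = (iint_aux m n g1 x + iint_aux m n g2 x)%E.
Proof.
move=> P1 P2; elim: n x => [//|n IH] x /=.
under eq_integral do rewrite IH.
apply: ge0_integralD => //; do ?[exact: sect_mf|by move=> y _; case: (iint_Pm n P1)|by move=> y _; case: (iint_Pm n P2)].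
Qed.

Lemma iintZ n g (c : R) x : Pm g -> 0 <= c ->
  iint_aux m n (fun x => c%:E * g x)%E x = (c%:E * iint_aux m n g x)%E.
Proof.
move=> P c0; elim: n x => [//|n IH] x /=.
under eq_integral do rewrite IH.
apply: ge0_integralZl => //; do ?[exact: sect_mf|by move=> y _; case: (iint_Pm n P)|by rewrite lee_fin].
Qed.

Lemma iint_le n g1 g2 x : Pm g1 -> Pm g2 -> (forall x, g1 x <= g2 x)%E ->
  (iint_aux m n g1 x <= iint_aux m n g2 x)%E.
Proof.
move=> P1 P2 le12; elim: n x => [|n IH] x /=; first exact: le12.
apply: ge0_le_integral => //; do ?[exact: sect_mf|by move=> y _; case: (iint_Pm n P1)|by move=> y _; exact: IH].
Qed.

Lemma iint0 n x : iint_aux m n (fun=> 0%E) x = 0%E.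
Proof.
elim: n x => [//|n IH] x /=.
under eq_integral do rewrite IH.
exact: integral0.
Qed.

Lemma iint_sum (I : Type) (s : seq I) (G : I -> X -> \bar R) n x :
  (forall i, Pm (G i)) ->
  iint_aux m n (fun x => \sum_(i <- s) G i x)%E x = (\sum_(i <- s) iint_aux m n (G i) x)%E.
Proof.
move=> PG; elim: s x => [|a s IH] x.
  by rewrite big_nil; under [X in iint_aux _ _ X]funext do rewrite big_nil; exact: iint0.
rewrite big_cons -IH -iintD //; last first.
  split.
    by apply: emeasurable_sum => i; case: (PG i).
  by move=> y; apply: sume_ge0 => i _; case: (PG i).
by under [X in iint_aux _ _ X]funext do rewrite big_cons.
Qed.

Lemma iint_0imp n g h x : Pm g -> Pm h -> (forall x, g x = 0%E -> h x = 0%E) ->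
  iint_aux m n g x = 0%E -> iint_aux m n h x = 0%E.
Proof.
move=> Pg Ph gh; elim: n x => [|n IH] x /=; first exact: gh.
move=> H0.
have mG := sect_mf n x Pg.
have mH := sect_mf n x Ph.
have G0 : forall y, (0 <= iint_aux m n g (upd x n y))%E by move=> y; case: (iint_Pm n Pg).
have H0' : forall y, (0 <= iint_aux m n h (upd x n y))%E by move=> y; case: (iint_Pm n Ph).
have /(ae_eq_integral_abs m measurableT mG).1 : (\int[m]_y `|iint_aux m n g (upd x n y)| = 0)%E.
  by under eq_integral do rewrite gee0_abs //.
move=> aeG.
rewrite (@ae_eq_integral _ _ _ m setT (cst 0%E)) //; first exact: integral0.
apply: filterS aeG => y /[apply] /= /IH //.
Qed.

Lemma iint_ge0 n g x : (forall x, (0 <= g x)%E) -> (0 <= iint_aux m n g x)%E.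
Proof.
move=> g0; elim: n x => [|n IH] x /=; first exact: g0.
by apply: integral_ge0 => y _; exact: IH.
Qed.

Lemma proj_mf i : (i < N)%N -> measurable_fun setT (fun x : X => (x i : RT)).
Proof.
move=> iN _ A mA; rewrite setTI.
have -> : (fun x : X => (x i : RT)) @^-1` A =
    [set x : X | forall j, (j < N)%N -> (if j == i then A else setT) (x j)].
  apply/seteqP; split => x /=.
    by move=> Ax j jN; case: eqP => // ->.
  by move=> H; have := H i iN; rewrite eqxx.
by apply: (box_meas (A := fun j => if j == i then A else setT)) => j; case: eqP.
Qed.

Lemma Pm_E (g : X -> R) : measurable_fun setT g -> (forall x, 0 <= g x) ->
  Pm (fun x => (g x)%:E).
Proof. by move=> mg g0; split; [exact/measurable_EFinP|move=> x; rewrite lee_fin]. Qed.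

Lemma iint_prod (h : nat -> R -> R) (c : R) n x :
  (forall i, (i < N)%N -> measurable_fun setT (h i : RT -> R)) ->
  (forall i y, 0 <= h i y) ->
  (forall i, (i < N)%N -> (\int[m]_y (h i y)%:E = 1)%E) -> 0 <= c -> (n <= N)%N ->
  iint_aux m n (fun x => (c * \prod_(0 <= i < N) h i (x i))%:E) x =
  (c * \prod_(n <= i < N) h i (x i))%:E.
Proof.
move=> hm h0 h1 c0; elim: n x => [//|n IH] x nN /=.
have key y : (c * \prod_(n <= i < N) h i (upd x n y i))%:E =
    ((c * \prod_(n.+1 <= i < N) h i (x i))%:E * (h n y)%:E)%E.
  rewrite big_ltn // /upd eqxx -EFinM mulrAC -mulrA; congr (_ * (_ * _))%:E.
  by apply: eq_big_nat => i /andP[ni _]; case: eqP => // E; move: ni; rewrite E ltnn.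
under eq_integral do rewrite IH ?(ltnW nN) // key.
rewrite ge0_integralZl //; do ?[by apply/measurable_EFinP; exact: hm|by move=> y _; rewrite lee_fin|by rewrite lee_fin; apply: mulr_ge0 => //; apply: prodr_ge0 => *].
  by rewrite h1 // mule1.
Qed.
Variables (pi : bool -> R) (Q : bool -> bool -> R) (f : bool -> R -> R).
Hypothesis pi0 : forall j, 0 <= pi j.
Hypothesis Q0 : forall i j, 0 <= Q i j.
Hypothesis f0 : forall j x, 0 <= f j x.
Hypothesis fm : forall j, measurable_fun setT (f j : RT -> R).
Hypothesis fint : forall j, (\int[m]_x (f j x)%:E = 1)%E.

Local Notation D := (@jdens R N pi Q f).

Lemma prior_ge0 t : 0 <= @prior R N pi Q t.
Proof.
rewrite /prior; case: N t => [//|n] t.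
by apply: mulr_ge0 => //; apply: prodr_ge0 => *.
Qed.

Lemma D_ge0 t x : 0 <= D t x.
Proof. by apply: mulr_ge0; [exact: prior_ge0|apply: prodr_ge0 => *]. Qed.

Lemma D_mf t : measurable_fun setT (fun x : X => D t x).
Proof.
apply: measurable_funM => //.
apply: measurable_prod => i _.
exact: (measurableT_comp (fm _) (proj_mf (ltn_ord i))).
Qed.

Lemma iint_D t x : iint_aux m N (fun x => (D t x)%:E) x = (@prior R N pi Q t)%:E.
Proof.
have -> : (fun x => (D t x)%:E) =
    (fun x => (@prior R N pi Q t * \prod_(0 <= i < N) f (nth false t i) (x i))%:E).
  apply/funext => y; rewrite big_mkord /jdens.
  by congr (_ * _)%:E; apply: eq_bigr => i _; rewrite (tnth_nth false).
rewrite (@iint_prod (fun i => f (nth false t i))) //; do ?[by rewrite big_geq // mulr1|by move=> i _; exact: fm|exact: prior_ge0].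
Qed.

Definition S x := \sum_(t : N.-tuple bool) D t x.
Definition Pc (c : bool -> bool) (i : 'I_N) x := \sum_(t : N.-tuple bool | c (tnth t i)) D t x.

Lemma Pc_ge0 c i x : 0 <= Pc c i x.
Proof. by apply: sumr_ge0 => t _; exact: D_ge0. Qed.

Lemma S_ge0 x : 0 <= S x.
Proof. by apply: sumr_ge0 => t _; exact: D_ge0. Qed.

Lemma S_split i x : S x = Pc id i x + Pc negb i x.
Proof. by rewrite /S (bigID (fun t : N.-tuple bool => tnth t i)). Qed.

Lemma Pc_mf c i : measurable_fun setT (fun x : X => Pc c i x).
Proof. rewrite /Pc; under eq_fun do rewrite big_mkcond /=.
by apply: measurable_sum => t; case: (c _) => //; exact: D_mf.
Qed.

Lemma S_mf : measurable_fun setT (fun x : X => S x).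
Proof. by apply: measurable_sum => t; exact: D_mf. Qed.

Lemma iint_S : iint_aux m N (fun x => (S x)%:E) (fun _ => 0) = (\sum_t @prior R N pi Q t)%:E.
Proof.
have -> : (fun x => (S x)%:E) = (fun x => \sum_(t : N.-tuple bool) (D t x)%:E)%E.
  by apply/funext => x; rewrite /S sumEFin.
rewrite iint_sum; last by move=> t; apply: Pm_E; [exact: D_mf|exact: D_ge0].
rewrite -sumEFin; apply: eq_bigr => t _; exact: iint_D.
Qed.

Definition Fc (c : bool -> bool) (psi : (nat -> R) -> 'I_N -> bool) x :=
  \sum_(i < N) ((psi x i)%:R : R) * Pc c i x.

Lemma psi_mf psi i : @measurable_proc R N psi ->
  measurable_fun setT (fun x : X => ((psi x i)%:R : R)).
Proof.
move=> mp.
have -> : (fun x : X => ((psi x i)%:R : R)) = \1_[set x : X | psi x i].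
  apply/funext => x; rewrite indicE.
  by case: (boolP (psi x i)) => h; [rewrite mem_set|rewrite memNset //= (negbTE h)].
by apply: measurable_indic; exact: (mp i).
Qed.

Lemma Fc_mf c psi : @measurable_proc R N psi -> measurable_fun setT (fun x : X => Fc c psi x).
Proof.
move=> mp; apply: measurable_sum => i.
by apply: measurable_funM; [exact: psi_mf|exact: Pc_mf].
Qed.

Lemma Fc_ge0 c psi x : 0 <= Fc c psi x.
Proof. by apply: sumr_ge0 => i _; apply: mulr_ge0; [exact: ler0n|exact: Pc_ge0]. Qed.

Lemma card_sumR (P : pred 'I_N) : (#|[set i | P i]|%:R : R) = \sum_(i < N) ((P i)%:R : R).
Proof.
rewrite -sum1_card natr_sum big_mkcond /=; apply: eq_bigr => i _.
by case: (boolP (P i)) => h; [rewrite mem_set|rewrite memNset //= (negbTE h)].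
Qed.

Lemma sum_D_card c psi x :
  \sum_(t : N.-tuple bool) D t x * (#|[set i : 'I_N | c (tnth t i) && psi x i]|%:R) = Fc c psi x.
Proof.
rewrite /Fc /Pc.
under [RHS]eq_bigr => i _ do rewrite mulr_sumr big_mkcond.
rewrite [RHS]exchange_big /=; apply: eq_bigr => t _.
rewrite card_sumR mulr_sumr; apply: eq_bigr => i _.
by case: (c _); case: (psi x i); rewrite /= ?mulr1 ?mulr0 ?mul1r ?mul0r.
Qed.

Lemma card_mf (c : bool -> bool) psi (t : N.-tuple bool) : @measurable_proc R N psi ->
  measurable_fun setT (fun x : X => (#|[set i : 'I_N | c (tnth t i) && psi x i]|%:R : R)).
Proof.
move=> mp; under eq_fun do rewrite card_sumR.
apply: measurable_sum => i; case: (c (tnth t i)) => /=; last exact: measurable_cst.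
exact: psi_mf.
Qed.

Lemma EH_Fc (c : bool -> bool) psi (mu : {measure set RT -> \bar R}) : @measurable_proc R N psi ->
  (forall A, mu A = m A) ->
  EH pi Q f mu (fun t x => (#|[set i : 'I_N | c (tnth t i) && psi x i]|%:R)%:E) =
  iint_aux m N (fun x => (Fc c psi x)%:E) (fun _ => 0).
Proof.
move=> mp Hmu; rewrite /EH /iint.
transitivity (\sum_(t : N.-tuple bool) iint_aux m N
   (fun x => (D t x * #|[set i : 'I_N | c (tnth t i) && psi x i]|%:R)%:E) (fun _ => 0%R))%E.
  apply: eq_bigr => t _; rewrite (iint_ext _ _ _ Hmu).
  by congr iint_aux; apply/funext => x; rewrite EFinM.
rewrite -iint_sum; last first.
  move=> t; apply: Pm_E.
    by apply: measurable_funM; [exact: D_mf|exact: card_mf].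
  by move=> x; apply: mulr_ge0; [exact: D_ge0|exact: ler0n].
by congr iint_aux; apply/funext => x; rewrite sumEFin sum_D_card.
Qed.

Variable lam : R.
Hypothesis lam0 : 0 < lam.
Hypothesis lam1 : lam < 1.

Local Notation phi := (@phi_lam R N pi Q f lam).

Lemma phi_iff i x : phi x i = (S x <= 0) || (Pc negb i x < lam * S x).
Proof.
rewrite /phi_lam /ell -/(S x) -/(Pc negb i x).
have := S_ge0 x; rewrite le_eqVlt => /orP[/eqP S0|Sp].
  by rewrite -S0 invr0 mulr0 lam0 lexx.
by rewrite ltr_pdivrMr // leNgt Sp.
Qed.

Lemma bool_set_meas (g : X -> bool) : measurable_fun setT g -> measurable [set x : X | g x].
Proof.
move=> mg; rewrite (_ : [set x | g x] = setT `&` g @^-1` [set true]).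
  by apply: mg.
by apply/seteqP; split => x /=; [move=> ->|case => _ ->].
Qed.

Lemma phi_mp : @measurable_proc R N phi.
Proof.
move=> i.
change (measurable ([set x : X | phi x i])).
rewrite (_ : [set x : X | phi x i] = [set x : X | S x <= 0] `|` [set x : X | Pc negb i x < lam * S x]).
  apply: measurableU; apply: bool_set_meas.
    by apply: measurable_fun_ler; [exact: S_mf|exact: measurable_cst].
  apply: measurable_fun_ltr; first exact: Pc_mf.
  by apply: measurable_funM; [exact: measurable_cst|exact: S_mf].
by apply/seteqP; split => x /=; rewrite phi_iff => /orP.
Qed.

Lemma key_pt psi x :
  lam * Fc id psi x + (1 - lam) * Fc negb phi x <= lam * Fc id phi x + (1 - lam) * Fc negb psi x.
Proof.
rewrite /Fc !mulr_sumr -!big_split /=; apply: ler_sum => i _.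
have Sx := S_split i x; have p1 := Pc_ge0 id i x; have p0 := Pc_ge0 negb i x.
have := phi_iff i x.
case: (psi x i); case: (phi x i) => /= H.
- lra.
- move: H => /esym/norP[]; rewrite -ltNge -leNgt => Sp Pge.
  rewrite Sx in Pge; nra.
- move: H => /esym/orP[S0|Plt].
    have P1z : Pc id i x = 0 by lra.
    have P0z : Pc negb i x = 0 by lra.
    rewrite P1z P0z; lra.
  rewrite Sx in Plt; nra.
- lra.
Qed.

Definition Wf x := \sum_(i < N) ((phi x i)%:R : R) * (lam * Pc id i x - (1 - lam) * Pc negb i x).

Lemma Wterm_ge0 i x : 0 <= ((phi x i)%:R : R) * (lam * Pc id i x - (1 - lam) * Pc negb i x).
Proof.
have Sx := S_split i x; have p1 := Pc_ge0 id i x; have p0 := Pc_ge0 negb i x.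
have := phi_iff i x; case: (phi x i) => /= H; last by rewrite mul0r.
rewrite mul1r; move: H => /esym/orP[S0|Plt].
  have P1z : Pc id i x = 0 by lra.
  have P0z : Pc negb i x = 0 by lra.
  rewrite P1z P0z; lra.
rewrite Sx in Plt; nra.
Qed.

Lemma Wf_ge0 x : 0 <= Wf x.
Proof. by apply: sumr_ge0 => i _; exact: Wterm_ge0. Qed.

Lemma Wf_eq x : Wf x + (1 - lam) * Fc negb phi x = lam * Fc id phi x.
Proof.
rewrite /Wf /Fc !mulr_sumr -big_split /=; apply: eq_bigr => i _.
ring.
Qed.

Lemma Wf0 x : Wf x = 0 -> Fc (fun=> true) phi x = 0.
Proof.
move=> W0; rewrite /Fc big1 // => i _.
have := psumr_eq0P (fun i _ => Wterm_ge0 i x) W0 (i:=i) isT.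
have Sx := S_split i x; have p1 := Pc_ge0 id i x; have p0 := Pc_ge0 negb i x.
have := phi_iff i x; case: (phi x i) => /= H; last by rewrite !mul0r.
rewrite !mul1r; move: H => /esym/orP[S0|Plt] Wz.
  have -> : Pc (fun=> true) i x = S x by [].
  have := S_ge0 x; lra.
rewrite Sx in Plt; nra.
Qed.

Lemma Wf_mf : measurable_fun setT (fun x : X => Wf x).
Proof.
apply: measurable_sum => i; apply: measurable_funM; first exact: (psi_mf _ phi_mp).
apply: measurable_funB; apply: measurable_funM; try exact: measurable_cst; exact: Pc_mf.
Qed.

Definition iiF (g : X -> R) := iint_aux m N (fun x => (g x)%:E) (fun _ => 0%R).

Lemma Pm_Z (g : X -> R) (c : R) : measurable_fun setT g -> (forall x, 0 <= g x) -> 0 <= c ->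
  Pm (fun x => c%:E * (g x)%:E)%E.
Proof.
move=> mg g0 c0.
have -> : (fun x => c%:E * (g x)%:E)%E = (fun x => (c * g x)%:E) by apply/funext => x; rewrite EFinM.
apply: Pm_E; first by apply: measurable_funM => //; exact: measurable_cst.
by move=> x; apply: mulr_ge0.
Qed.

Lemma iiFZ (g : X -> R) (c : R) : measurable_fun setT g -> (forall x, 0 <= g x) -> 0 <= c ->
  iiF (fun x => c * g x) = (c%:E * iiF g)%E.
Proof.
move=> mg g0 c0; rewrite /iiF -iintZ //; try exact: Pm_E;
  try (by congr iint_aux; apply/funext => x; rewrite EFinM).
Qed.

Lemma iint_lin (g1 g2 : X -> R) (c1 c2 : R) :
  measurable_fun setT g1 -> (forall x, 0 <= g1 x) ->
  measurable_fun setT g2 -> (forall x, 0 <= g2 x) -> 0 <= c1 -> 0 <= c2 ->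
  iiF (fun x => c1 * g1 x + c2 * g2 x) = (c1%:E * iiF g1 + c2%:E * iiF g2)%E.
Proof.
move=> m1 p1 m2 p2 c10 c20.
rewrite -iiFZ // -iiFZ // /iiF -iintD; last 2 first.
- apply: Pm_E; first by apply: measurable_funM => //; exact: measurable_cst.
  by move=> x; apply: mulr_ge0.
- apply: Pm_E; first by apply: measurable_funM => //; exact: measurable_cst.
  by move=> x; apply: mulr_ge0.
by congr iint_aux; apply/funext => x; rewrite EFinD.
Qed.

Lemma Pc_le_S c i x : Pc c i x <= S x.
Proof.
rewrite /Pc /S big_mkcond /=; apply: ler_sum => t _.
by case: (c _) => //; exact: D_ge0.
Qed.

Lemma Fc_le c psi x : Fc c psi x <= N%:R * S x.
Proof.
apply: (@le_trans _ _ (\sum_(i < N) S x)); last by rewrite sumr_const card_ord mulr_natl.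
apply: ler_sum => i _.
apply: le_trans (Pc_le_S c i x).
rewrite -[X in _ <= X]mul1r; apply: ler_wpM2r; first exact: Pc_ge0.
by case: (psi x i).
Qed.

Lemma iiF_fin (g : X -> R) c : measurable_fun setT g -> (forall x, 0 <= g x) ->
  (forall x, g x <= c * S x) -> 0 <= c -> iiF g \is a fin_num.
Proof.
move=> mg g0 gc c0.
rewrite ge0_fin_numE; last by apply: iint_ge0 => x; rewrite lee_fin.
apply: (@le_lt_trans _ _ (iiF (fun x => c * S x))).
  apply: iint_le; [exact: Pm_E| |by move=> x; rewrite lee_fin].
  apply: Pm_E; first by apply: measurable_funM; [exact: measurable_cst|exact: S_mf].
  by move=> x; apply: mulr_ge0 => //; exact: S_ge0.
rewrite iiFZ //; [|exact: S_mf|exact: S_ge0].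
by rewrite /iiF iint_S -EFinM ltry.
Qed.

Lemma Fc_fin c psi : @measurable_proc R N psi -> iiF (Fc c psi) \is a fin_num.
Proof.
move=> mp; apply: (@iiF_fin _ N%:R); [exact: Fc_mf|exact: Fc_ge0|exact: Fc_le|exact: ler0n].
Qed.

Lemma E1 psi : @measurable_proc R N psi ->
  (lam%:E * iiF (Fc id psi) + (1 - lam)%:E * iiF (Fc negb phi) <=
   lam%:E * iiF (Fc id phi) + (1 - lam)%:E * iiF (Fc negb psi))%E.
Proof.
move=> mp; have l0 : 0 <= lam by exact: ltW.
have l1 : 0 <= 1 - lam by rewrite subr_ge0 ltW.
rewrite -!iint_lin //; try exact: Fc_ge0; try (apply: Fc_mf; first [exact: mp|exact: phi_mp]).
apply: iint_le; first 2 last.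
- by move=> x; rewrite lee_fin; exact: key_pt.
- apply: Pm_E; last by move=> x; apply: addr_ge0; apply: mulr_ge0 => //; exact: Fc_ge0.
  by apply: measurable_funD; apply: measurable_funM; try exact: measurable_cst; apply: Fc_mf => //; exact: phi_mp.
- apply: Pm_E; last by move=> x; apply: addr_ge0; apply: mulr_ge0 => //; exact: Fc_ge0.
  by apply: measurable_funD; apply: measurable_funM; try exact: measurable_cst; apply: Fc_mf => //; exact: phi_mp.
Qed.

Lemma E2 : (iiF Wf + (1 - lam)%:E * iiF (Fc negb phi) = lam%:E * iiF (Fc id phi))%E.
Proof.
have l0 : 0 <= lam by exact: ltW.
have l1 : 0 <= 1 - lam by rewrite subr_ge0 ltW.
rewrite -[iiF Wf]mul1e -iint_lin //; last 4 first.
- exact: Wf_mf.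
- exact: Wf_ge0.
- by apply: Fc_mf; exact: phi_mp.
- exact: Fc_ge0.
rewrite -iiFZ //; [|by apply: Fc_mf; exact: phi_mp|exact: Fc_ge0].
by congr iiF; apply/funext => x; rewrite mul1r Wf_eq.
Qed.

Lemma E3 : iiF Wf = 0%E -> iiF (Fc (fun=> true) phi) = 0%E.
Proof.
apply: iint_0imp.
- exact: Pm_E Wf_mf Wf_ge0.
- apply: Pm_E; [by apply: Fc_mf; exact: phi_mp|exact: Fc_ge0].
- by move=> x [] /Wf0 ->.
Qed.

Lemma E4 psi : @measurable_proc R N psi ->
  iiF (Fc (fun=> true) psi) = (iiF (Fc id psi) + iiF (Fc negb psi))%E.
Proof.
move=> mp; rewrite -[iiF (Fc id psi)]mul1e -[iiF (Fc negb psi)]mul1e -iint_lin //;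
  try exact: Fc_mf; try exact: Fc_ge0.
congr iiF; apply/funext => x; rewrite !mul1r /Fc -big_split /=; apply: eq_bigr => i _.
by rewrite -mulrDr -S_split.
Qed.

Lemma W_fin : iiF Wf \is a fin_num.
Proof.
apply: (@iiF_fin _ (lam * N%:R)); [exact: Wf_mf|exact: Wf_ge0| |].
  move=> x; have := Wf_eq x; have := Fc_le id phi x; have := Fc_ge0 negb phi x.
  have := S_ge0 x; move=> s0 h0 h1 h2.
  have l1 : 0 <= 1 - lam by rewrite subr_ge0 ltW.
  have : lam * Fc id phi x <= lam * (N%:R * S x) by apply: ler_wpM2l => //; exact: ltW.
  rewrite mulrA; nra.
by apply: mulr_ge0; [exact: ltW|exact: ler0n].
Qed.

Lemma optimal psi (mu : {measure set RT -> \bar R}) : (forall A, mu A = m A) ->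
  @measurable_proc R N psi ->
  mFDR pi Q f mu psi <= mFDR pi Q f mu phi -> mTDR pi Q f mu psi <= mTDR pi Q f mu phi.
Proof.
move=> Hmu mp.
rewrite /mFDR /mTDR.
rewrite (EH_Fc id mp Hmu) (EH_Fc id phi_mp Hmu).
rewrite (EH_Fc negb mp Hmu) (EH_Fc negb phi_mp Hmu).
rewrite (EH_Fc (fun=> true) mp Hmu) (EH_Fc (fun=> true) phi_mp Hmu).
rewrite -/(iiF (Fc id psi)) -/(iiF (Fc id phi)) -/(iiF (Fc negb psi)) -/(iiF (Fc negb phi)).
rewrite -/(iiF (Fc (fun=> true) psi)) -/(iiF (Fc (fun=> true) phi)).
rewrite (E4 mp) (E4 phi_mp).
have e1 := E1 mp; have e2 := E2; have e3 := E3.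
have ha := Fc_fin id mp; have hb := Fc_fin negb mp.
have hA := Fc_fin id phi_mp; have hB := Fc_fin negb phi_mp.
have hW := W_fin.
have ga : 0 <= fine (iiF (Fc id psi)) by apply: fine_ge0; apply: iint_ge0 => x; rewrite lee_fin Fc_ge0.
have gb : 0 <= fine (iiF (Fc negb psi)) by apply: fine_ge0; apply: iint_ge0 => x; rewrite lee_fin Fc_ge0.
have gA : 0 <= fine (iiF (Fc id phi)) by apply: fine_ge0; apply: iint_ge0 => x; rewrite lee_fin Fc_ge0.
have gB : 0 <= fine (iiF (Fc negb phi)) by apply: fine_ge0; apply: iint_ge0 => x; rewrite lee_fin Fc_ge0.
have gW : 0 <= fine (iiF Wf) by apply: fine_ge0; apply: iint_ge0 => x; rewrite lee_fin Wf_ge0.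
move: e1 e2 e3 ga gb gA gB gW.
rewrite -(fineK ha) -(fineK hb) -(fineK hA) -(fineK hB) -(fineK hW).
set a := fine (iiF (Fc id psi)); set b := fine (iiF (Fc negb psi)).
set A := fine (iiF (Fc id phi)); set B := fine (iiF (Fc negb phi)).
set W := fine (iiF Wf).
rewrite -!EFinM -!EFinD lee_fin => e1 /eqP; rewrite eqe => /eqP e2 e3 ga gb gA gB gW.
rewrite /= => hfdr.
set T := fine _.
have T0 : 0 <= T.
  apply: fine_ge0; apply: sume_ge0 => t _; rewrite /iint (iint_ext _ _ _ Hmu); apply: iint_ge0 => x.
  by apply: mule_ge0; rewrite lee_fin ?D_ge0 ?ler0n.
apply: ler_wpM2r; first by rewrite invr_ge0.
apply: (@arith _ lam a b A B W) => //.
move=> ABn; apply/eqP => W0; move: ABn.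
have := e3; rewrite W0 (E4 phi_mp) -(fineK hA) -(fineK hB) -EFinD => /(_ erefl) /eqP.
by rewrite eqe => /eqP ->; rewrite eqxx.
Qed.

End Sec.

Theorem lemma21 (R : realType) (disc : bool) (N : nat)
  (pi : bool -> R) (Q : bool -> bool -> R) (f : bool -> R -> R)
  (Hparams : hmm_params pi Q) (Hdens : densities disc f)
  (HA1i : A1i disc f) (HA1ii : A1ii disc f) (HA2 : A2 pi Q)
  (lam : R) (Hlam0 : 0 < lam) (Hlam1 : lam < 1) :
  mTDR (N:=N) pi Q f (@mu_of R disc) (phi_lam (N:=N) pi Q f lam) =
  sup [set mTDR (N:=N) pi Q f (@mu_of R disc) psi | psi in
        [set psi | measurable_proc psi /\
           mFDR (N:=N) pi Q f (@mu_of R disc) psi <= mFDR (N:=N) pi Q f (@mu_of R disc) (phi_lam (N:=N) pi Q f lam)]].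
Proof.
have [pi0 [_ [Q0 _]]] := Hparams.
have f0 : forall j x, 0 <= f j x by move=> j; case: (Hdens j).
have fm : forall j, measurable_fun setT (f j : measurableTypeR R -> R).
  by move=> j; case: (Hdens j) => _ [].
pose m := (@muf R disc : {sigma_finite_measure set (measurableTypeR R) -> \bar R}).
have fint : forall j, (\int[m]_x (f j x)%:E = 1)%E.
  by move=> j; case: (Hdens j) => _ [].
have Hmu : forall A, @mu_of R disc A = m A by [].
have mphi : measurable_proc (phi_lam (N:=N) pi Q f lam).
  exact: (@phi_mp R N pi Q f pi0 Q0 f0 fm lam Hlam0).
set E := [set _ | _ in _].
have phiE : E (mTDR (N:=N) pi Q f (@mu_of R disc) (phi_lam (N:=N) pi Q f lam)).
  by exists (phi_lam (N:=N) pi Q f lam).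
have ub : ubound E (mTDR (N:=N) pi Q f (@mu_of R disc) (phi_lam (N:=N) pi Q f lam)).
  move=> _ [psi [mp hle] <-].
  exact: (@optimal R N m pi Q f pi0 Q0 f0 fm fint lam Hlam0 Hlam1 psi _ Hmu mp hle).
apply/eqP; rewrite eq_le; apply/andP; split.
  by apply: sup_upper_bound => //; split; [exists (mTDR (N:=N) pi Q f (@mu_of R disc) (phi_lam (N:=N) pi Q f lam))|exists (mTDR (N:=N) pi Q f (@mu_of R disc) (phi_lam (N:=N) pi Q f lam))].
by apply: ge_sup => //; exists (mTDR (N:=N) pi Q f (@mu_of R disc) (phi_lam (N:=N) pi Q f lam)).
Qed.
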